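(* Let $K$ be an arbitrary field, $E$ an $n$-dimensional $K$-vector space ($n\ge1$), and $m=\lfloor n/2\rfloor+1$. Then $\bigwedge^mE\otimes\bigwedge^{n-m}E$ is spanned by the images of the maps $\psi(r,m)$, $1\le r\le m$.
   Context: For $1\le r\le m$, $\psi(r,m):\bigwedge^{m-r}E\otimes\bigwedge^{n-m+r}E\to\bigwedge^mE\otimes\bigwedge^{n-m}E$ is the composition of $1\otimes\Delta:\bigwedge^{m-r}E\otimes\bigwedge^{n-m+r}E\to\bigwedge^{m-r}E\otimes\bigwedge^rE\otimes\bigwedge^{n-m}E$, where $\Delta:\bigwedge^{n-m+r}E\to\bigwedge^rE\otimes\bigwedge^{n-m}E$ is the component of the comultiplication of the exterior algebra (i.e. $\Delta(v_1\wedge\dots\wedge v_k)=\sum_{S}\pm v_S\otimes v_{S^c}$ over $r$-element subsets $S\subset[1,k]$ with the shuffle sign), followed by exterior multiplication $\bigwedge^{m-r}E\otimes\bigwedge^rE\to\bigwedge^mE$ on the first two factors. *)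

(* Defs.v *)
From HB Require Import structures.
From mathcomp Require Import all_boot all_order all_algebra.
Set Implicit Arguments. Unset Strict Implicit. Unset Printing Implicit Defensive.
Import Order.TTheory GRing.Theory.
Local Open Scope ring_scope.

(* Model: E = K^n with standard basis e_0,...,e_{n-1}.
   The exterior algebra /\E has basis e_S (S : {set 'I_n}), e_S = e_{s1}/\.../\e_{sk}
   with s1 < ... < sk.  /\E (x) /\E has basis e_S (x) e_T, so its elements are
   coordinate functions on pairs (S,T).  /\^a E (x) /\^b E is the subspace of
   functions supported on pairs with #|S| = a, #|T| = b. *)

Notation pairT n := ({set 'I_n} * {set 'I_n})%type.

Notation tens_sp K n := {ffun pairT n -> K}.

Definition homog (K : fieldType) (n a b : nat) (x : tens_sp K n) : Prop :=
  forall A B : {set 'I_n}, x (A, B) != 0 -> #|A| = a /\ #|B| = b.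

Definition tens (K : fieldType) (n : nat) (S T : {set 'I_n}) : tens_sp K n :=
  [ffun p => (p == (S, T))%:R].

(* sign with e_S /\ e_T = sgn S T * e_{S u T} when S, T disjoint;
   also the shuffle sign of the comultiplication: e_U = sgn S (U\S) e_S /\ e_{U\S} *)
Definition sgn (K : fieldType) (n : nat) (S T : {set 'I_n}) : K :=
  (-1) ^+ #|[set p : 'I_n * 'I_n | [&& p.1 \in S, p.2 \in T & (p.2 < p.1)%N]]|.

(* psi(r,m) : /\^{m-r}E (x) /\^{n-m+r}E -> /\^m E (x) /\^{n-m} E, given on the
   basis: e_A (x) e_B |-> sum over r-subsets S of B of
   sgn S (B\S) * (e_A /\ e_S) (x) e_{B\S}, where e_A /\ e_S = 0 unless A, S are
   disjoint, and then equals sgn A S * e_{A u S}; extended linearly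
   (only the (m-r, n-m+r) component of the argument is used). *)
Definition psi (K : fieldType) (n r m : nat) (x : tens_sp K n) : tens_sp K n :=
  \sum_(A : {set 'I_n} | #|A| == (m - r)%N)
   \sum_(B : {set 'I_n} | #|B| == (n - m + r)%N)
    \sum_(S : {set 'I_n} | [&& S \subset B, #|S| == r & [disjoint A & S]])
      [ffun p => (x (A, B) * sgn K S (B :\: S) * sgn K A S) * tens K (A :|: S) (B :\: S) p].

(* Main.v *)
Require Import Defs.
From HB Require Import structures.
From mathcomp Require Import all_boot all_order all_algebra.
From mathcomp Require Import zify ring.
Import GRing.Theory.
Local Open Scope ring_scope.

Set Implicit Arguments. Unset Strict Implicit. Unset Printing Implicit Defensive.

Ltac brute := repeat (case: (_ \in _)); rewrite /=; intros; (done || (case: (_ < _)%N; done)).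

Lemma disjointP (T : finType) (A B : {set T}) :
  reflect (forall x, x \in A -> x \in B -> False) [disjoint A & B].
Proof.
rewrite disjoints_subset; apply: (iffP subsetP) => h x.
  by move=> /h; rewrite inE => /negP hn hb; exact: hn hb.
move=> hA; rewrite inE; apply/negP; exact: h x hA.
Qed.

Section Aux.
Variables (K : fieldType) (n : nat).

Definition sc (c : K) (x : tens_sp K n) : tens_sp K n := [ffun p => c * x p].

Lemma psiD r m (x y : tens_sp K n) : psi r m (x + y) = psi r m x + psi r m y.
Proof.
rewrite /psi -big_split; apply: eq_bigr => A _.
rewrite -big_split; apply: eq_bigr => B _.
rewrite -big_split; apply: eq_bigr => S _.
by apply/ffunP => p; rewrite !ffunE !mulrDl.
Qed.

Lemma psiZ r m c (x : tens_sp K n) : psi r m (sc c x) = sc c (psi r m x).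
Proof.
apply/ffunP => p; rewrite /psi ffunE !sum_ffunE mulr_sumr; apply: eq_bigr => A _.
rewrite !sum_ffunE mulr_sumr; apply: eq_bigr => B _.
rewrite !sum_ffunE mulr_sumr; apply: eq_bigr => S _.
by rewrite !ffunE !mulrA.
Qed.

Lemma psi0 r m : psi r m (0 : tens_sp K n) = 0.
Proof.
apply/ffunP => p; rewrite /psi ffunE !sum_ffunE big1 // => A _.
rewrite sum_ffunE big1 // => B _; rewrite sum_ffunE big1 // => S _.
by rewrite !ffunE !mul0r.
Qed.

Lemma homog0 a b : homog a b (0 : tens_sp K n).
Proof. by move=> A B; rewrite ffunE eqxx. Qed.

Lemma homogD a b (x y : tens_sp K n) : homog a b x -> homog a b y -> homog a b (x + y).
Proof.
move=> hx hy A B; rewrite ffunE.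
case: (eqVneq (x (A, B)) 0) => [->|/hx //]; rewrite add0r; exact: hy.
Qed.

Lemma homogZ a b c (x : tens_sp K n) : homog a b x -> homog a b (sc c x).
Proof.
move=> hx A B; rewrite ffunE.
case: (eqVneq (x (A, B)) 0) => [->|/hx //]; by rewrite mulr0 eqxx.
Qed.

Definition inV (m : nat) (t : tens_sp K n) :=
  exists xs : 'I_m.+1 -> tens_sp K n,
    (forall r : 'I_m.+1, (1 <= r)%N -> homog (m - r) (n - m + r) (xs r)) /\
    t = \sum_(r < m.+1 | (1 <= r)%N) psi r m (xs r).

Lemma inV0 m : inV m 0.
Proof.
exists (fun _ => 0); split => [r _|]; first exact: homog0.
by rewrite big1 // => r _; rewrite psi0.
Qed.

Lemma inVD m x y : inV m x -> inV m y -> inV m (x + y).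
Proof.
move=> [xs [hx ->]] [ys [hy ->]]; exists (fun r => xs r + ys r); split.
  by move=> r hr; apply: homogD; [apply: hx | apply: hy].
by rewrite -big_split; apply: eq_bigr => r _; rewrite psiD.
Qed.

Lemma sc_sum m c (F : 'I_m.+1 -> tens_sp K n) :
  sc c (\sum_(r < m.+1 | (1 <= r)%N) F r) = \sum_(r < m.+1 | (1 <= r)%N) sc c (F r).
Proof.
apply/ffunP => p; rewrite ffunE !sum_ffunE mulr_sumr; apply: eq_bigr => r _.
by rewrite ffunE.
Qed.

Lemma inVZ m c x : inV m x -> inV m (sc c x).
Proof.
move=> [xs [hx ->]]; exists (fun r => sc c (xs r)); split.
  by move=> r hr; apply: homogZ; apply: hx.
by rewrite sc_sum; apply: eq_bigr => r _; rewrite psiZ.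
Qed.

Lemma inV_psi m r y : (1 <= r)%N -> (r <= m)%N -> homog (m - r) (n - m + r) y ->
  inV m (psi r m y).
Proof.
move=> h1 h2 hy.
have hr : (r < m.+1)%N by [].
exists (fun r' : 'I_m.+1 => if nat_of_ord r' == r then y else 0); split.
  move=> r' _; case: eqP => [->|_] //; exact: homog0.
rewrite (bigD1 (Ordinal hr)) //= eqxx big1 ?addr0 // => r' /andP[_ hne].
case: eqP => [E|_]; last exact: psi0.
by move: hne; rewrite -val_eqE /= E eqxx.
Qed.


Definition cnt (X T : {set 'I_n}) :=
  [set p : 'I_n * 'I_n | [&& p.1 \in X, p.2 \in T & (p.2 < p.1)%N]].

Lemma sgnE X T : sgn K X T = (-1) ^+ #|cnt X T|.
Proof. by []. Qed.

Lemma sgnUl (X1 X2 T : {set 'I_n}) : [disjoint X1 & X2] ->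
  sgn K (X1 :|: X2) T = sgn K X1 T * sgn K X2 T.
Proof.
move/disjointP=> hd; rewrite !sgnE -exprD; congr (_ ^+ _).
have -> : cnt (X1 :|: X2) T = cnt X1 T :|: cnt X2 T.
  by apply/setP => p; rewrite !inE; brute.
rewrite cardsU (_ : cnt X1 T :&: cnt X2 T = set0) ?cards0 ?subn0 //.
apply/setP => p; rewrite !inE.
case h1: (p.1 \in X1); case h2: (p.1 \in X2); rewrite ?andbF ?andFb //; by case: (hd _ h1 h2).
Qed.

Lemma sgnUr (X T1 T2 : {set 'I_n}) : [disjoint T1 & T2] ->
  sgn K X (T1 :|: T2) = sgn K X T1 * sgn K X T2.
Proof.
move/disjointP=> hd; rewrite !sgnE -exprD; congr (_ ^+ _).
have -> : cnt X (T1 :|: T2) = cnt X T1 :|: cnt X T2.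
  by apply/setP => p; rewrite !inE; brute.
rewrite cardsU (_ : cnt X T1 :&: cnt X T2 = set0) ?cards0 ?subn0 //.
apply/setP => p; rewrite !inE.
case h1: (p.2 \in T1); case h2: (p.2 \in T2); rewrite ?andbF ?andFb //; by case: (hd _ h1 h2).
Qed.

Lemma sgn_sq (S T : {set 'I_n}) : sgn K S T * sgn K S T = 1.
Proof. by rewrite /sgn -exprD addnn -mul2n exprM sqrrN expr1n expr1n. Qed.

Lemma sgn_key (A' B' S : {set 'I_n}) : S \subset B' -> [disjoint A' & S] ->
  sgn K A' B' * (sgn K S (B' :\: S) * sgn K A' S) = sgn K (A' :|: S) (B' :\: S).
Proof.
move=> hS hd.
have eB : B' = S :|: (B' :\: S).
  apply/setP=> y; rewrite !inE.
  have : (y \in S) ==> (y \in B') by apply/implyP; exact: (subsetP hS y).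
  brute.
rewrite {1}eB sgnUr; last by apply/disjointP => y; rewrite !inE => ->.
rewrite sgnUl //; rewrite -[RHS]mulr1 -(sgn_sq A' S); ring.
Qed.

Lemma psi_tens r m (A' B' : {set 'I_n}) : #|A'| = (m - r)%N -> #|B'| = (n - m + r)%N ->
  forall p, psi r m (tens K A' B') p =
  \sum_(S : {set 'I_n} | [&& S \subset B', #|S| == r & [disjoint A' & S]])
     (sgn K S (B' :\: S) * sgn K A' S) * tens K (A' :|: S) (B' :\: S) p.
Proof.
move=> hA hB p; rewrite /psi sum_ffunE (bigD1 A') /=; last by rewrite hA.
rewrite [X in _ + X]big1 ?addr0; last first.
  move=> A1 /andP[_ hne].
  rewrite sum_ffunE big1 // => B1 _; rewrite sum_ffunE big1 // => S _.
  by rewrite !ffunE xpair_eqE (negbTE hne) /= !mul0r.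
rewrite sum_ffunE (bigD1 B') /=; last by rewrite hB.
rewrite [X in _ + X]big1 ?addr0; last first.
  move=> B1 /andP[_ hne].
  rewrite sum_ffunE big1 // => S _; rewrite !ffunE xpair_eqE (negbTE hne) andbF.
  by rewrite !mul0r.
rewrite sum_ffunE; apply: eq_bigr => S _; rewrite !ffunE eqxx /= mul1r.
by [] || rewrite mulrA.
Qed.

Lemma D1U1 (x : 'I_n) (V : {set 'I_n}) : ((x |: V) :\ x == V) = (x \notin V).
Proof.
apply/eqP/idP => [<-|h]; first by rewrite !inE eqxx.
exact: setU1K.
Qed.

End Aux.

Section Main.
Variables (K : fieldType) (n m : nat) (A B : {set 'I_n}).
Hypotheses (hA : #|A| = m) (hB : #|B| = (n - m)%N) (hlt : (n - m < m)%N).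

Definition Cnt (V P Q : {set 'I_n}) : K :=
  \sum_(S : {set 'I_n} | [&& S \subset B :|: V, #|S| == #|V| & [disjoint A :\: V & S]])
     (((A :\: V) :|: S, (B :|: V) :\: S) == (P, Q))%:R.

Lemma cardsAV (V : {set 'I_n}) : V \subset A :\: B -> #|A :\: V| = (m - #|V|)%N.
Proof. by move=> hV; rewrite cardsDS ?hA //; exact: subset_trans hV (subsetDl A B). Qed.

Lemma cardsBV (V : {set 'I_n}) : V \subset A :\: B -> #|B :|: V| = (n - m + #|V|)%N.
Proof.
move=> hV; rewrite cardsU hB (_ : B :&: V = set0) ?cards0 ?subn0 //.
apply/setP => y; rewrite !inE.
have : (y \in V) ==> (y \in A :\: B) by apply/implyP; exact: subsetP hV y.
rewrite !inE; brute.
Qed.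

Lemma G_eval (V P Q : {set 'I_n}) : V \subset A :\: B ->
  sgn K (A :\: V) (B :|: V) * psi #|V| m (tens K (A :\: V) (B :|: V)) (P, Q)
  = sgn K P Q * Cnt V P Q.
Proof.
move=> hV; rewrite psi_tens ?cardsAV ?cardsBV // mulr_sumr /Cnt mulr_sumr.
apply: eq_bigr => S /and3P[h1 _ h3]; rewrite ffunE eq_sym.
case: eqP => [[<- <-]|_]; last by rewrite !mulr0.
by rewrite !mulr1 sgn_key.
Qed.

Lemma toggle (x : 'I_n) (V P Q : {set 'I_n}) : x \in A :\: B -> x \in P -> x \notin V ->
  Cnt V P Q = Cnt (x |: V) P Q.
Proof.
move=> hxR hxP hxV.
have hxA : x \in A by move: hxR; rewrite inE => /andP[].
have hxB : x \notin B by move: hxR; rewrite inE => /andP[].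
rewrite /Cnt [RHS](bigID (fun S : {set 'I_n} => x \in S)) /= [X in _ + X]big1 ?addr0 => [|S /andP[_ hx]]; last first.
  rewrite xpair_eqE; case: eqP => [E|_] //=.
  by move: hxP; rewrite -E !inE eqxx /= (negbTE hx).
rewrite [RHS](reindex_onto (fun S : {set 'I_n} => x |: S) (fun S : {set 'I_n} => S :\ x)) /=; last first.
  by move=> S /andP[_ hx]; apply: setD1K.
symmetry; apply: eq_big => [S|S /andP[_ h4]].
  case hxS: (x \in S).
    rewrite (_ : ((x |: S) :\ x == S) = false) ?andbF; last first.
      by apply/negbTE/eqP => E; move: hxS; rewrite -E !inE eqxx.
    rewrite (_ : [disjoint A :\: V & S] = false) ?andbF //.
    apply/negbTE/negP => /disjointP h; apply: (h x) => //.
    by rewrite !inE hxA (negbTE hxV).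
  rewrite D1U1 hxS setU11 !andbT.
  rewrite -!setD_eq0 -!setI_eq0 !cardsU1 hxS (negbTE hxV) /= eqSS.
  rewrite (_ : (x |: S) :\: (B :|: (x |: V)) = S :\: (B :|: V)); last first.
    apply/setP => y; rewrite !inE; case: (eqVneq y x) => [->|_].
      by rewrite hxS ?hxA ?(negbTE hxV) ?(negbTE hxB); brute.
    brute.
  rewrite (_ : (A :\: (x |: V)) :&: (x |: S) = (A :\: V) :&: S) //.
  apply/setP => y; rewrite !inE; case: (eqVneq y x) => [->|_].
    by rewrite hxS ?hxA ?(negbTE hxV) ?(negbTE hxB); brute.
  brute.
have hxS : x \notin S by rewrite -D1U1.
congr ((_ == _)%:R); congr (_, _).
  apply/setP => y; rewrite !inE; case: (eqVneq y x) => [->|_].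
    by rewrite hxA (negbTE hxV).
  brute.
apply/setP => y; rewrite !inE; case: (eqVneq y x) => [->|_].
  by rewrite (negbTE hxB) (negbTE hxV) (negbTE hxS).
brute.
Qed.

Lemma cardBA : (#|B :\: A| < #|A :\: B|)%N.
Proof.
have h1 := cardsID A B; have h2 := cardsID B A; rewrite setIC in h2.
rewrite hA in h2; rewrite hB in h1; lia.
Qed.

Lemma Cnt_zero (V P Q : {set 'I_n}) : [disjoint P & A :\: B] -> V \subset A :\: B ->
  Cnt V P Q = 0.
Proof.
move=> hdP hV; rewrite /Cnt big1 // => S /and3P[h1 /eqP h2 h3].
rewrite xpair_eqE; case: eqP => [EP|_] //=.
have hSB : S \subset B :\: A.
  apply/subsetP => y hy.
  have f1 : y \in B :|: V by exact: subsetP h1 y hy.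
  have f3 : (y \in A :\: V) = false by exact: disjointFl h3 hy.
  have f4 : y \in P by rewrite -EP !inE hy orbT.
  have f5 : (y \in A :\: B) = false by exact: disjointFr hdP f4.
  have f6 : (y \in V) ==> (y \in A :\: B) by apply/implyP; exact: subsetP hV y.
  move: f1 f3 f5 f6; move: hy; rewrite !inE; brute.
have hRV : A :\: B \subset V.
  apply/subsetP => y hy.
  have f1 : (y \in P) = false by exact: disjointFl hdP hy.
  have f2 : (y \in A :\: V) ==> (y \in P) by apply/implyP => h; rewrite -EP inE h.
  move: f1 f2 hy; rewrite !inE; brute.
have := subset_leq_card hSB; have := subset_leq_card hRV; have := cardBA.
rewrite h2; lia.
Qed.

Lemma Cnt0 (P Q : {set 'I_n}) : Cnt set0 P Q = ((A, B) == (P, Q))%:R.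
Proof.
rewrite /Cnt (big_pred1 set0) ?setD0 ?setU0 ?setD0 //.
move=> S /=; rewrite cards0 cards_eq0; case: (eqVneq S set0) => [->|]; rewrite ?andbF //=.
by rewrite sub0set /=; apply/disjointP => y _; rewrite inE.
Qed.

Definition FF (V : {set 'I_n}) : tens_sp K n :=
  sc ((-1) ^+ #|V| * sgn K (A :\: V) (B :|: V)) (psi #|V| m (tens K (A :\: V) (B :|: V))).

Lemma sumF : \sum_(V : {set 'I_n} | V \subset A :\: B) FF V = 0.
Proof.
apply/ffunP => [[P Q]]; rewrite sum_ffunE ffunE.
rewrite (eq_bigr (fun V : {set 'I_n} => (-1) ^+ #|V| * (sgn K P Q * Cnt V P Q))); last first.
  by move=> V hV; rewrite ffunE -mulrA G_eval.
case: (boolP [disjoint P & A :\: B]) => hd.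
  by rewrite big1 // => V hV; rewrite Cnt_zero // !mulr0.
move/pred0Pn: hd => [x /andP[hxP hxR]].
rewrite (bigID (fun V : {set 'I_n} => x \in V)) /=.
rewrite [X in X + _](reindex_onto (fun V : {set 'I_n} => x |: V) (fun V : {set 'I_n} => V :\ x)) /=; last first.
  by move=> V /andP[_ hx]; apply: setD1K.
rewrite (eq_bigl (fun V : {set 'I_n} => (V \subset A :\: B) && (x \notin V))); last first.
  have hx2 : x \in A :\: B by move: hxR.
  by move=> V; rewrite subUset sub1set setU11 /= hx2 andbT D1U1.
rewrite -big_split big1 // => V /andP[hV hxV] /=.
rewrite cardsU1 hxV -toggle // add1n exprS; ring.
Qed.

Lemma tensAB : inV m (tens K A B).
Proof.
have hsum := sumF.
rewrite (bigD1 set0) ?sub0set //= in hsum.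
have hs : \sum_(V : {set 'I_n} | (V \subset A :\: B) && (V != set0)) FF V = - FF set0.
  by apply/eqP; rewrite -addr_eq0 addrC hsum.
have -> : tens K A B = sc (- sgn K A B)
    (\sum_(V : {set 'I_n} | (V \subset A :\: B) && (V != set0)) FF V).
  rewrite hs; apply/ffunP => [[P Q]]; rewrite !ffunE.
  rewrite -mulrA G_eval ?sub0set // Cnt0 cards0 expr0 mul1r mulrNN eq_sym.
  case: eqP => [[-> ->]|_]; first by rewrite mulr1 sgn_sq.
  by rewrite !mulr0.
apply: inVZ; apply: (big_ind (inV m)); [exact: inV0 | exact: inVD |].
move=> V /andP[hV hV0]; apply: inVZ; apply: inV_psi.
- by rewrite card_gt0.
- by rewrite -hA; apply: subset_leq_card; exact: subset_trans hV (subsetDl A B).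
- move=> P Q; rewrite ffunE; case: ((P, Q) =P (A :\: V, B :|: V)) => [[-> ->] _|_ /=]; last by rewrite eqxx.
  by rewrite cardsAV ?cardsBV.
Qed.

End Main.

Theorem lemma5 (K : fieldType) (n : nat) (Hn : (1 <= n)%N) :
  let m := (n./2).+1 in
  forall t : tens_sp K n, homog m (n - m) t ->
  exists xs : 'I_m.+1 -> tens_sp K n,
    (forall r : 'I_m.+1, (1 <= r)%N -> homog (m - r) (n - m + r) (xs r)) /\
    t = \sum_(r < m.+1 | (1 <= r)%N) psi r m (xs r).
Proof.
move=> m t Ht.
have hlt : (n - m < m)%N.
  by rewrite /m; have := odd_double_half n; rewrite -addnn; lia.
suff : inV m t by [].
have -> : t = \sum_(p : pairT n) sc (t p) (tens K p.1 p.2).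
  apply/ffunP => -[P Q]; rewrite sum_ffunE (bigD1 (P, Q)) //= big1 => [|[p1 p2] hp].
    by rewrite !ffunE eqxx mulr1 addr0.
  by rewrite !ffunE /= eq_sym (negbTE hp) mulr0.
apply: (big_ind (inV m)); [exact: inV0 | exact: inVD |].
move=> [P Q] _; case: (eqVneq (t (P, Q)) 0) => [->|h].
  have -> : sc 0 (tens K (P, Q).1 (P, Q).2) = 0.
    by apply/ffunP => p; rewrite !ffunE mul0r.
  exact: inV0.
have [h1 h2] := Ht P Q h.
by apply: inVZ; apply: tensAB.
Qed.
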